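(* Let $\{X_t\}_{t\ge0}$ follow $X_{t+1}=\sigma(A_\star X_t)+HV_t$, $X_0=HV_0$, with $A_\star,H\in\mathbb R^{d_x\times d_x}$, $V_t$ i.i.d. $N(0,I_{d_x})$, and $\sigma$ applying a scalar function coordinatewise. Assume: (1) $H$ is full rank; (2) the scalar $\sigma$ is $1$-Lipschitz, $\sigma(0)=0$, and there is $\zeta\in(0,1]$ with $|\sigma(x)-\sigma(y)|\ge\zeta|x-y|$ for all $x,y$; (3) there exist a positive definite diagonal $P_\star\succcurlyeq I$ and $\rho\in(0,1)$ with $A_\star^\top P_\star A_\star\preccurlyeq\rho P_\star$. Then $$\sup_{t\in\mathbb N}\mathbb{E}\|X_t\|_2^4\le B_X^4,\qquad B_X=\frac{12\sqrt2\,\|H\|_{op}\|P_\star\|_{op}^{1/2}\sqrt{d_x}}{1-\rho}.$$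
   Context: $\|\cdot\|_{op}$ is the largest singular value; $\preccurlyeq$ is the Loewner order. *)

(* Defs.v *)
From HB Require Import structures.
From mathcomp Require Import all_boot all_order all_algebra.
From mathcomp Require Import all_classical all_reals all_analysis.
Set Implicit Arguments. Unset Strict Implicit. Unset Printing Implicit Defensive.
Import Order.TTheory GRing.Theory Num.Theory.
Local Open Scope classical_set_scope.
Local Open Scope ring_scope.

Section Defs.
Context {R : realType}.

Definition norm2 {n : nat} (v : 'cV[R]_n) : R :=
  Num.sqrt (\sum_(i < n) v i 0 ^+ 2).

Definition qform {n : nat} (M : 'M[R]_n) (v : 'cV[R]_n) : R :=
  (v^T *m M *m v) 0 0.

Definition loewner_le {n : nat} (M N : 'M[R]_n) : Prop :=
  forall v : 'cV[R]_n, 0 <= qform (N - M) v.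

Definition posdef {n : nat} (M : 'M[R]_n) : Prop :=
  M^T = M /\ forall v : 'cV[R]_n, v != 0 -> 0 < qform M v.

Definition opnorm {m n : nat} (M : 'M[R]_(m, n)) : R :=
  sup [set norm2 (M *m v) | v in [set v : 'cV[R]_n | norm2 v = 1]].

Definition vmap {n : nat} (f : R -> R) (v : 'cV[R]_n) : 'cV[R]_n := map_mx f v.

End Defs.

Definition mutually_independent d (T : measurableType d) (R : realType)
  (P : probability T R) (I : eqType) (F : I -> T -> R) : Prop :=
  forall (s : seq I) (B : I -> set R), uniq s ->
    (forall i, measurable (B i)) ->
    P (\bigcap_(i in [set` s]) (F i @^-1` B i)) =
      (\prod_(i <- s) P (F i @^-1` B i))%E.

Fixpoint procX {R : realType} {T : Type} {n : nat} (sigma : R -> R)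
  (A H : 'M[R]_n) (V : nat -> T -> 'cV[R]_n) (t : nat) (x : T) : 'cV[R]_n :=
  match t with
  | 0 => H *m V 0%N x
  | t'.+1 => vmap sigma (A *m procX sigma A H V t' x) + H *m V t' x
  end.

(* Main.v *)
Require Import Defs.
From HB Require Import structures.
From mathcomp Require Import all_boot all_order all_algebra.
From mathcomp Require Import all_classical all_reals all_analysis.
Import Order.TTheory GRing.Theory Num.Theory.
Import numFieldNormedType.Exports.
From mathcomp Require Import measurable_realfun.
From mathcomp Require Import ring lra.
Local Open Scope classical_set_scope.
Local Open Scope ring_scope.

Section Help.
Context {R : realType} {n : nat}.
Implicit Types (M N A : 'M[R]_n) (v w : 'cV[R]_n).

Definition Qf (p : 'I_n -> R) v := \sum_i p i * v i 0 ^+ 2.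

Lemma qformE M v : qform M v = \sum_j \sum_i v i 0 * M i j * v j 0.
Proof.
rewrite /qform !mxE; apply: eq_bigr => j _; rewrite !mxE big_distrl /=.
by apply: eq_bigr => i _; rewrite !mxE.
Qed.

Lemma qform_diag M v : is_diag_mx M -> qform M v = \sum_i M i i * v i 0 ^+ 2.
Proof.
move=> /is_diag_mxP dM; rewrite qformE; apply: eq_bigr => j _.
rewrite (bigD1 j) //= big1 ?addr0; first by rewrite expr2; ring.
by move=> i ij; rewrite dM ?mulr0 ?mul0r //.
Qed.

Lemma qformB M N v : qform (N - M) v = qform N v - qform M v.
Proof.
rewrite !qformE -sumrB; apply: eq_bigr => j _; rewrite -sumrB.
by apply: eq_bigr => i _; rewrite !mxE; ring.
Qed.

Lemma qformZ c M v : qform (c *: M) v = c * qform M v.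
Proof.
rewrite !qformE mulr_sumr; apply: eq_bigr => j _; rewrite mulr_sumr.
by apply: eq_bigr => i _; rewrite !mxE; ring.
Qed.

Lemma qformAT A M v : qform (A^T *m M *m A) v = qform M (A *m v).
Proof. by rewrite /qform trmx_mul !mulmxA. Qed.

Lemma qform1 v : qform 1%:M v = \sum_i v i 0 ^+ 2.
Proof.
rewrite qform_diag ?scalar_mx_is_diag //; apply: eq_bigr => i _.
by rewrite mxE eqxx mul1r.
Qed.

Lemma sum_delta (f : 'I_n -> R) i :
  \sum_j f j * (delta_mx i 0 : 'cV[R]_n) j 0 ^+ 2 = f i.
Proof.
rewrite (bigD1 i) //= big1 ?addr0; first by rewrite mxE !eqxx /= expr1n mulr1.
by move=> j ji; rewrite mxE (negbTE ji) /= expr0n mulr0.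
Qed.

Lemma norm2_delta i : norm2 (delta_mx i 0 : 'cV[R]_n) = 1.
Proof.
rewrite /norm2 (eq_bigr (fun j => 1 * (delta_mx i 0 : 'cV[R]_n) j 0 ^+ 2)).
  by rewrite sum_delta sqrtr1.
by move=> j _; rewrite mul1r.
Qed.

Lemma mul_delta M i j : (M *m (delta_mx i 0 : 'cV[R]_n)) j 0 = M j i.
Proof.
rewrite mxE (bigD1 i) //= big1 ?addr0; first by rewrite mxE !eqxx mulr1.
by move=> k ki; rewrite mxE (negbTE ki) mulr0.
Qed.

Lemma norm2_ge0 v : 0 <= norm2 v.
Proof. exact: sqrtr_ge0. Qed.

Lemma sum_sq_ge0 v : 0 <= \sum_i v i 0 ^+ 2.
Proof. by apply: sumr_ge0 => i _; rewrite sqr_ge0. Qed.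

Lemma norm2_sq v : norm2 v ^+ 2 = \sum_i v i 0 ^+ 2.
Proof. by rewrite sqr_sqrtr // sum_sq_ge0. Qed.

Lemma coord_le_norm2 v j : `|v j 0| <= norm2 v.
Proof.
rewrite -sqrtr_sqr /norm2 ler_wsqrtr // (bigD1 j) //= lerDl.
by apply: sumr_ge0 => i _; rewrite sqr_ge0.
Qed.

Lemma norm2_le_l1 v : norm2 v <= \sum_i `|v i 0|.
Proof.
have S0 : 0 <= \sum_i `|v i 0| by apply: sumr_ge0.
rewrite /norm2 -(ger0_norm S0) -sqrtr_sqr ler_wsqrtr //.
rewrite expr2 mulr_sumr; apply: ler_sum => i _.
rewrite -[_ ^+ 2]ger0_norm ?sqr_ge0 // normrX expr2.
rewrite ler_wpM2r //. rewrite (bigD1 i) //= lerDl.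
by apply: sumr_ge0.
Qed.

Lemma norm2Z c v : norm2 (c *: v) = `|c| * norm2 v.
Proof.
rewrite /norm2 (eq_bigr (fun i => c ^+ 2 * v i 0 ^+ 2)).
  by rewrite -mulr_sumr sqrtrM ?sqr_ge0 // sqrtr_sqr.
by move=> i _; rewrite mxE exprMn.
Qed.

Lemma mx_bound M v : norm2 (M *m v) <= (\sum_i \sum_j `|M i j|) * norm2 v.
Proof.
apply: (le_trans (norm2_le_l1 _)); rewrite mulr_suml; apply: ler_sum => i _.
rewrite mxE mulr_suml; apply: (le_trans (ler_norm_sum _ _ _)); apply: ler_sum => j _.
by rewrite normrM ler_wpM2l // coord_le_norm2.
Qed.

Lemma opnorm_ub M v : norm2 (M *m v) <= opnorm M * norm2 v.
Proof.
have [v0|v0] := eqVneq (norm2 v) 0.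
  have := mx_bound M v; rewrite v0 mulr0 => h.
  by apply: le_trans h _; rewrite mulr0.
have vp : 0 < norm2 v by rewrite lt_def v0 norm2_ge0.
set u := (norm2 v)^-1 *: v.
have nu : norm2 u = 1 by rewrite norm2Z ger0_norm ?invr_ge0 ?norm2_ge0 // mulVf.
have hs : has_sup [set norm2 (M *m v) | v in [set v : 'cV[R]_n | norm2 v = 1]].
  split; first by exists (norm2 (M *m u)), u.
  exists (\sum_i \sum_j `|M i j|) => _ [w /= w1 <-].
  by have := mx_bound M w; rewrite w1 mulr1.
have := sup_upper_bound hs (ex_intro2 _ _ u nu erefl).
rewrite -/(opnorm M) /u -scalemxAr norm2Z ger0_norm ?invr_ge0 ?norm2_ge0 //.
by rewrite mulrC ler_pdivrMr.
Qed.

Lemma sq_conv (a b r : R) : 0 < r -> r < 1 -> (a + b) ^+ 2 <= a ^+ 2 / r + b ^+ 2 / (1 - r).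
Proof.
move=> r0 r1; rewrite -subr_ge0.
have r1' : 1 - r != 0 by rewrite subr_eq0 eq_sym lt_eqF.
have -> : a ^+ 2 / r + b ^+ 2 / (1 - r) - (a + b) ^+ 2 =
  ((1 - r) * a - r * b) ^+ 2 / (r * (1 - r)).
  by field; rewrite r1' gt_eqF.
by rewrite divr_ge0 ?sqr_ge0 // mulr_ge0 // ?subr_ge0 ltW.
Qed.

Lemma sq_step (Q Q' W r : R) : 0 < r -> r < 1 -> 0 <= Q' ->
  Q' <= r * Q + W / (1 - r) -> Q' ^+ 2 <= r * Q ^+ 2 + W ^+ 2 / (1 - r) ^+ 3.
Proof.
move=> r0 r1 Q0 h.
have r1' : 1 - r != 0 by rewrite subr_eq0 eq_sym lt_eqF.
apply: (le_trans (y := (r * Q + W / (1 - r)) ^+ 2)).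
  by rewrite ler_sqr ?nnegrE // (le_trans Q0 h).
rewrite -subr_ge0.
have -> : r * Q ^+ 2 + W ^+ 2 / (1 - r) ^+ 3 - (r * Q + W / (1 - r)) ^+ 2 =
  r * (1 - r) * (Q - W / (1 - r) ^+ 2) ^+ 2.
  by field.
by rewrite mulr_ge0 ?sqr_ge0 // mulr_ge0 ?subr_ge0 ?ltW.
Qed.

Lemma sq_sum_le (a : 'I_n -> R) : (\sum_i a i) ^+ 2 <= (2 * n%:R) * \sum_i a i ^+ 2.
Proof.
rewrite expr2 big_distrl /=.
apply: (le_trans (y := \sum_i \sum_j (a i ^+ 2 + a j ^+ 2))).
  apply: ler_sum => i _; rewrite big_distrr /=; apply: ler_sum => j _.
  rewrite -subr_ge0 (_ : _ - _ = (a i - a j) ^+ 2 + a i * a j * 0 + (a i) ^+ 2 * 0 + (a i ^+ 2 + a j ^+ 2 - 2 * (a i * a j)) - (a i - a j) ^+ 2 + (a i ^+ 2 + a j ^+ 2 - a i * a j - (a i ^+ 2 + a j ^+ 2 - 2 * (a i * a j)))); last by ring.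
  nra.
rewrite (eq_bigr (fun i => n%:R * a i ^+ 2 + \sum_j a j ^+ 2)); last first.
  by move=> i _; rewrite big_split /= sumr_const card_ord mulr_natl.
rewrite big_split /= sumr_const card_ord -mulr_sumr mulr_natl; lra.
Qed.


Lemma Qf_ge0 (p : 'I_n -> R) v : (forall i, 0 <= p i) -> 0 <= Qf p v.
Proof. by move=> p0; apply: sumr_ge0 => i _; rewrite mulr_ge0 ?sqr_ge0. Qed.

Lemma step (p : 'I_n -> R) (sig : R -> R) A (r : R) x y :
  (forall i, 0 <= p i) -> (forall z, sig z ^+ 2 <= z ^+ 2) ->
  0 < r -> r < 1 -> (forall x, Qf p (A *m x) <= r ^+ 2 * Qf p x) ->
  Qf p (vmap sig (A *m x) + y) <= r * Qf p x + Qf p y / (1 - r).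
Proof.
move=> p0 hs r0 r1 hA.
apply: (le_trans (y := Qf p (vmap sig (A *m x)) / r + Qf p y / (1 - r))).
  rewrite /Qf !mulr_suml -big_split /=; apply: ler_sum => i _.
  rewrite !mxE -!(mulrA (p i)) -mulrDr ler_wpM2l //.
  exact: sq_conv.
rewrite lerD2r.
have h2 : Qf p (vmap sig (A *m x)) <= Qf p (A *m x).
  by apply: ler_sum => i _; rewrite mxE ler_wpM2l.
rewrite ler_pdivrMr //; apply: (le_trans h2); apply: (le_trans (hA x)).
by rewrite expr2 -mulrA mulrC.
Qed.

End Help.

Lemma pdf_pt (R : realType) (x : R) : x ^+ 4 * normal_pdf 0 1 x <= 64 * normal_pdf 0 2 x.
Proof.
rewrite /normal_pdf oner_eq0 pnatr_eq0 /=.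
rewrite /normal_peak /normal_fun !subr0.
pose a : R := Num.ExtraDef.sqrtr (pi *+ 2).
have a0 : 0 < a by rewrite sqrtr_gt0 mulrn_wgt0 // pi_gt0.
have -> : Num.ExtraDef.sqrtr (1 ^+ 2 * pi *+ 2) = a by rewrite expr1n mul1r.
have -> : Num.ExtraDef.sqrtr ((2:R) ^+ 2 * pi *+ 2) = 2 * a.
  by rewrite -mulrnAr sqrtrM ?sqr_ge0 // sqrtr_sqr ger0_norm.
set y := 3 / 8 * x ^+ 2.
have y0 : 0 <= y by rewrite mulr_ge0 ?sqr_ge0 //.
have -> : expR (- x ^+ 2 / (1 ^+ 2 *+ 2)) = expR (- x ^+ 2 / (2 ^+ 2 *+ 2)) * expR (- y).
  by rewrite -expRD; congr expR; rewrite /y; field.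
set e2 := expR (- x ^+ 2 / (2 ^+ 2 *+ 2)).
have e20 : 0 < e2 by rewrite expR_gt0.
have K : x ^+ 4 * expR (- y) <= 32.
  rewrite expRN.
  have ey := expR_ge1Dxn 1 y0.
  have ep : 0 < expR y by rewrite expR_gt0.
  rewrite ler_pdivrMr //.
  have -> : x ^+ 4 = 64 / 9 * y ^+ 2 by rewrite /y; field.
  move: ey; rewrite (_ : (1%N.+1)`!%:R = 2 :> R) //=. 
  move=> ey. nra.
have ai : 0 < a^-1 by rewrite invr_gt0.
rewrite invfM.
have -> : x ^+ 4 * (a^-1 * (e2 * expR (- y))) = (x ^+ 4 * expR (- y)) * (a^-1 * e2) by ring.
have -> : 64 * (2^-1 / a * e2) = 32 * (a^-1 * e2).
  by field; rewrite gt_eqF.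
by rewrite ler_pM2r ?mulr_gt0.
Qed.

Section dens.
Context d (T : measurableType d) (R : realType).
Variables (nu mu : {measure set T -> \bar R}) (g : T -> R).
Hypothesis g0 : forall x, 0 <= g x.
Hypothesis mg : measurable_fun setT g.
Hypothesis hnu : forall A, measurable A -> nu A = (\int[mu]_(x in A) (g x)%:E)%E.
Import HBNNSimple.
Local Open Scope ereal_scope.

Lemma density_cov (f : T -> \bar R) (E : set T) : (forall x, 0 <= f x) ->
    measurable E -> measurable_fun E f ->
  \int[mu]_(x in E) (f x * (g x)%:E) = \int[nu]_(x in E) f x.
Proof.
move=> f0 mE mf; set G := fun x => (g x)%:E.
have mG : measurable_fun setT G by exact/measurable_EFinP.
have G0 x : 0 <= G x by rewrite lee_fin.
pose h := nnsfun_approx mE mf.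
have -> : \int[nu]_(x in E) f x =
    lim (\int[nu]_(x in E) (EFin \o h n) x @[n --> \oo]).
  have fE x : E x -> f x = lim ((EFin \o h n) x @[n --> \oo]).
    by move=> Ex; apply/esym/cvg_lim => //; exact: cvg_nnsfun_approx.
  under eq_integral => x /[!inE] /fE -> //.
  apply: monotone_convergence => //.
  - move=> n; apply/measurable_EFinP.
    by apply: (measurable_funS measurableT) => //; exact/measurable_funP.
  - by move=> n x Ex //=; rewrite lee_fin.
  - by move=> x Ex a b ab; rewrite lee_fin; exact/lefP/nd_nnsfun_approx.
have -> : \int[mu]_(x in E) (f x * G x) =
    lim (\int[mu]_(x in E) ((EFin \o h n) \* G) x @[n --> \oo]).
  have fg x : E x -> f x * G x = lim (((EFin \o h n) \* G) x @[n --> \oo]).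
    by move=> Ex; apply/esym/cvg_lim => //; apply: cvgeZr;
      [by []|exact: cvg_nnsfun_approx].
  under eq_integral => x /[!inE] /fg -> //.
  apply: monotone_convergence => [//| | |].
  - move=> n; apply/emeasurable_funM; apply/measurable_funTS.
      exact/measurable_EFinP.
    exact: mG.
  - by move=> n x Ex /=; rewrite mule_ge0 ?lee_fin.
  - by move=> x Ex a b ab/=; rewrite lee_wpmul2r ?lee_fin//; exact/lefP/nd_nnsfun_approx.
suff suf n : \int[mu]_(x in E) ((EFin \o h n) x * G x) =
    \int[nu]_(x in E) (EFin \o h n) x.
  by under eq_fun do rewrite suf.
transitivity (\int[nu]_(x in E)
   (\sum_(y \in range (h n)) (y * \1_(h n @^-1` [set y]) x)%:E)); last first.
  by apply: eq_integral => t tE; rewrite /= fimfunE -fsumEFin.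
have indich m r : measurable_fun E (fun x => (r * \1_(h m @^-1` [set r]) x)%:E).
  by apply: (measurable_comp measurableT) => //; exact: measurable_funM.
rewrite ge0_integral_fsum//; last by move=> m y Ey; exact: nnfun_muleindic_ge0.
transitivity (\int[mu]_(x in E) (\sum_(y \in range (h n))
    (y * \1_(h n @^-1` [set y]) x)%:E * G x)).
  under [RHS]eq_integral => x xE.
    rewrite -ge0_mule_fsuml => [|y]; last exact: nnfun_muleindic_ge0.
    rewrite fsumEFin // -(fimfunE _ x); over.
  by [].
rewrite ge0_integral_fsum//; last 2 first.
  - move=> y; apply: emeasurable_funM => //; apply: measurable_funTS.
    exact: mG.
  - by move=> m y Ey; rewrite mule_ge0 ?nnfun_muleindic_ge0.
apply: eq_fsbigr => r rhn.
under [RHS]eq_integral do rewrite EFinM.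
rewrite integralZl_indic_nnsfun => //.
under eq_integral do rewrite EFinM -muleA.
rewrite ge0_integralZl//.
- under eq_integral do rewrite muleC.
  rewrite (eq_integral (G \_ (h n @^-1` [set r]))); last first.
    by move=> x xE; rewrite epatch_indic.
  by rewrite -integral_mkcondr -hnu// integral_indic// setIC.
- apply: emeasurable_funM; first exact/measurable_EFinP.
  exact/measurable_funTS.
- by move=> t Et; rewrite mule_ge0 ?lee_fin.
- by move: rhn; rewrite inE => -[t _ <-]; rewrite lee_fin.
Qed.
End dens.

Lemma gauss4 d (T : measurableType d) (R : realType) (P : probability T R)
  (X : {RV P >-> R}) : distribution P X = normal_prob 0 1 ->
  (\int[P]_x ((X x) ^+ 4)%:E <= 64%:E)%E.
Proof.
move=> HX.
have mX : measurable_fun setT (X : T -> measurableTypeR R).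
  move=> mD Y mY; exact: (measurable_funP X mD Y mY).
have mf : measurable_fun setT (fun y : measurableTypeR R => (y ^+ 4)%:E).
  by apply/measurable_EFinP; exact: measurable_funX.
have f0 : {in setT, forall y : measurableTypeR R, (0 <= (y ^+ 4)%:E)%E}.
  by move=> y _; rewrite lee_fin exprn_even_ge0.
have := @ge0_integral_pushforward _ _ T (measurableTypeR R) R (X : T -> measurableTypeR R) mX P setT _ measurableT mf f0.
rewrite preimage_setT /= => <-.
have hnu : forall A, measurable A -> pushforward P (X : T -> measurableTypeR R) A =
    (\int[lebesgue_measure]_(x in A) (normal_pdf 0 1 x)%:E)%E.
  by move=> A mA; rewrite -[LHS]/(distribution P X A) HX.
rewrite -(@density_cov _ (measurableTypeR R) _ _ _ _ (@normal_pdf_ge0 R 0 1) (@measurable_normal_pdf R 0 1) hnu) //; last first.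
  by move=> y; rewrite lee_fin exprn_even_ge0.
under eq_integral do rewrite -EFinM.
apply: (@le_trans _ _ (\int[lebesgue_measure]_x (64 * normal_pdf 0 2 x)%:E)%E).
  apply: ge0_le_integral => //.
  - by move=> y _; rewrite lee_fin mulr_ge0 ?exprn_even_ge0 ?normal_pdf_ge0.
  - apply/measurable_EFinP; apply: measurable_funM; first exact: measurable_funX.
    exact: measurable_normal_pdf.
  - by apply/measurable_EFinP; apply: measurable_funM => //; exact: measurable_normal_pdf.
  - by move=> y _; rewrite lee_fin pdf_pt.
under eq_integral do rewrite EFinM.
rewrite ge0_integralZl_EFin //.
- by rewrite integral_normal_pdf mule1.
- by move=> y _; rewrite lee_fin normal_pdf_ge0.
- by apply/measurable_EFinP; exact: measurable_normal_pdf.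
Qed.


Theorem proposition19 (R : realType) (d : measure_display) (T : measurableType d)
  (P : probability T R) (dx : nat)
  (Astar H : 'M[R]_dx) (sigma : R -> R)
  (V : nat -> 'I_dx -> {RV P >-> R})
  (Pstar : 'M[R]_dx) (zeta rho : R) :
  (* V_t i.i.d. N(0, I): all coordinates mutually independent standard normals *)
  mutually_independent P (fun p : nat * 'I_dx => (V p.1 p.2 : T -> R)) ->
  (forall t i, distribution P (V t i) = normal_prob 0 1) ->
  (* (1) H full rank *)
  \rank H = dx ->
  (* (2) sigma *)
  (forall x y, `|sigma x - sigma y| <= `|x - y|) ->
  sigma 0 = 0 ->
  0 < zeta <= 1 ->
  (forall x y, zeta * `|x - y| <= `|sigma x - sigma y|) ->
  (* (3) Lyapunov matrix *)
  is_diag_mx Pstar -> posdef Pstar -> loewner_le 1%:M Pstar ->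
  0 < rho < 1 ->
  loewner_le (Astar^T *m Pstar *m Astar) (rho *: Pstar) ->
  let Vvec := fun t x => \col_(i < dx) (V t i x) in
  let X := procX sigma Astar H Vvec in
  let BX := 12 * Num.sqrt 2 * opnorm H * Num.sqrt (opnorm Pstar)
              * Num.sqrt dx%:R / (1 - rho) in
  (ereal_sup (range (fun t : nat =>
      \int[P]_x ((norm2 (X t x)) ^+ 4)%:E)) <= (BX ^+ 4)%:E)%E.

Proof.
move=> _ Vnorm rkH sig_lip sig0 zeta01 _ Pdiag [Psym Ppd] P1 rho01 Hly.
rewrite /=.
set Vvec := (fun (t : nat) (x : T) => \col_i V t i x : 'cV[R]_dx).
set X := procX sigma Astar H Vvec.
set BX := (X in (X ^+ 4)%:E).
case/andP: rho01 => rho0 rho1.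
pose p := fun i => Pstar i i.
have QE : forall v, qform Pstar v = Qf p v by move=> v; rewrite qform_diag.
have p1 : forall i, 1 <= p i.
  move=> i; have := P1 (delta_mx i 0); rewrite qformB qform1 QE /Qf sum_delta.
  rewrite (eq_bigr (fun j => 1 * (delta_mx i 0 : 'cV[R]_dx) j 0 ^+ 2)) ?sum_delta ?subr_ge0 //.
  by move=> j _; rewrite mul1r.
have p0 : forall i, 0 <= p i by move=> i; exact: le_trans ler01 (p1 i).
have pP : forall i, p i <= opnorm Pstar.
  move=> i; have := opnorm_ub Pstar (delta_mx i 0); rewrite norm2_delta mulr1.
  apply: le_trans; rewrite -[p i]ger0_norm ?p0 // -sqrtr_sqr /norm2 ler_wsqrtr //.
  rewrite (bigD1 i) //= mul_delta lerDl; apply: sumr_ge0 => j _; exact: sqr_ge0.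
have opP0 : 0 <= opnorm Pstar.
  case: (posnP dx) => [dx0|dxp]; last exact: le_trans (p0 (Ordinal dxp)) (pP _).
  rewrite /opnorm (_ : [set _ | _ in _] = set0) ?sup0 //.
  apply/seteqP; split => // _ [v /= v1 _]; move: v1.
  rewrite /norm2; move: v; rewrite dx0 => v; rewrite big_ord0 sqrtr0.
  by move=> /eqP; rewrite eq_sym oner_eq0.
set r := Num.sqrt rho.
have r0 : 0 < r by rewrite sqrtr_gt0.
have r1 : r < 1 by rewrite -sqrtr1 ltr_sqrt.
have rr : r ^+ 2 = rho by rewrite sqr_sqrtr // ltW.
have hA : forall x, Qf p (Astar *m x) <= r ^+ 2 * Qf p x.
  by move=> x; have := Hly x; rewrite qformB qformZ qformAT !QE rr subr_ge0.
have hs : forall z, sigma z ^+ 2 <= z ^+ 2.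
  move=> z; have := sig_lip z 0; rewrite sig0 !subr0 => h.
  rewrite -(ger0_norm (sqr_ge0 (sigma z))) -(ger0_norm (sqr_ge0 z)) !normrX.
  by rewrite ler_pXn2r ?nnegrE.
have sigc : forall x : R, sigma @ x --> sigma x.
  move=> x; apply/cvgrPdist_lt => e e0; near=> y.
  apply: le_lt_trans (sig_lip x y) _; near: y.
  first [exact: (cvgr_dist_lt _ _ cvg_id e0) | exact: (cvgr_dist_lt _ _ (@cvg_id _ (nbhs x)) e0) | exact: (@cvgr_dist_lt _ _ _ (nbhs x) _ id x cvg_id e e0)].
pose q t x := Qf p (X t x).
pose w t x := Qf p (H *m Vvec t x).
have q0 : forall t x, 0 <= q t x by move=> t x; exact: Qf_ge0.
have w0 : forall t x, 0 <= w t x by move=> t x; exact: Qf_ge0.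
have qstep : forall t x, q t.+1 x ^+ 2 <= r * q t x ^+ 2 + w t x ^+ 2 / (1 - r) ^+ 3.
  move=> t x; apply: sq_step => //; exact: step.
pose C := opnorm Pstar ^+ 2 * opnorm H ^+ 4 * (2 * dx%:R).
have C0 : 0 <= C.
  by apply: mulr_ge0; [apply: mulr_ge0; exact: exprn_even_ge0 | exact: mulr_ge0].
have wb : forall t x, w t x ^+ 2 <= C * \sum_j (V t j x) ^+ 4.
  move=> t x; set v := Vvec t x.
  have h1 : w t x <= opnorm Pstar * opnorm H ^+ 2 * \sum_i v i 0 ^+ 2.
    apply: (le_trans (y := opnorm Pstar * \sum_i (H *m v) i 0 ^+ 2)).
      rewrite /w /Qf mulr_sumr; apply: ler_sum => i _; by rewrite ler_wpM2r ?sqr_ge0.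
    have hv := opnorm_ub H v.
    rewrite -mulrA ler_wpM2l // -!norm2_sq -exprMn ler_pXn2r ?nnegrE ?norm2_ge0 //.
    exact: le_trans (norm2_ge0 _) hv.
  have h2 : w t x ^+ 2 <= (opnorm Pstar * opnorm H ^+ 2 * \sum_i v i 0 ^+ 2) ^+ 2.
    by rewrite ler_pXn2r ?nnegrE // (le_trans (w0 t x) h1).
  apply: (le_trans h2).
  have S2 := sq_sum_le (fun i => v i 0 ^+ 2).
  rewrite (_ : (opnorm Pstar * opnorm H ^+ 2 * \sum_i v i 0 ^+ 2) ^+ 2 =
     (opnorm Pstar ^+ 2 * opnorm H ^+ 4) * (\sum_i v i 0 ^+ 2) ^+ 2); last by ring.
  apply: (le_trans (ler_wpM2l _ S2)); first by rewrite mulr_ge0 ?exprn_even_ge0 // sqr_ge0.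
  have -> : \sum_i v i 0 ^+ 2 ^+ 2 = \sum_j V t j x ^+ 4.
    by apply: eq_bigr => i _; rewrite /v mxE -exprM.
  by rewrite /C !mulrA.
have msig : measurable_fun setT sigma by exact: continuous_measurable_fun.
have mV : forall t j, measurable_fun setT (fun x => V t j x) by move=> t j; exact: measurable_funP.
have mHV : forall t i, measurable_fun setT (fun x => (H *m Vvec t x) i 0).
  move=> t i.
  rewrite (_ : (fun x => _) = (fun x => \sum_j H i j * V t j x)); last first.
    by apply/funext => x; rewrite mxE; apply: eq_bigr => j _; rewrite mxE.
  by apply: measurable_sum => j; apply: measurable_funM.
have mX : forall t i, measurable_fun setT (fun x => X t x i 0).
  elim => [|t IH] i; first exact: mHV.
  rewrite (_ : (fun x => _) = (fun x => sigma (\sum_j Astar i j * X t x j 0) + (H *m Vvec t x) i 0)); last first.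
    by apply/funext => x; rewrite /X /= !mxE.
  apply: measurable_funD; last exact: mHV.
  apply: measurableT_comp => //; apply: measurable_sum => j; apply: measurable_funM => //.
have mq : forall t, measurable_fun setT (fun x => (q t x ^+ 2)%:E).
  move=> t; apply/measurable_EFinP; apply: measurable_funX; apply: measurable_sum => i.
  by apply: measurable_funM => //; apply: measurable_funX; exact: mX.
have mw : forall t, measurable_fun setT (fun x => (w t x ^+ 2)%:E).
  move=> t; apply/measurable_EFinP; apply: measurable_funX; apply: measurable_sum => i.
  by apply: measurable_funM => //; apply: measurable_funX; exact: mHV.
pose M := C * (dx%:R * 64).
have M0 : 0 <= M by rewrite mulr_ge0 // mulr_ge0.
have Ew : forall t, (\int[P]_x (w t x ^+ 2)%:E <= M%:E)%E.
  move=> t.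
  apply: (le_trans (y := (\int[P]_x (C * \sum_j (V t j x) ^+ 4)%:E)%E)).
    apply: ge0_le_integral => //.
    - by move=> x _; rewrite lee_fin sqr_ge0.
    - apply/measurable_EFinP; apply: measurable_funM => //.
      by apply: measurable_sum => j; apply: measurable_funX.
    - by move=> x _; rewrite lee_fin wb.
  under eq_integral do rewrite EFinM -sumEFin.
  rewrite ge0_integralZl_EFin //; last 2 first.
  - by move=> x _; apply: sume_ge0 => j _; rewrite lee_fin exprn_even_ge0.
  - by apply: emeasurable_sum => j; apply/measurable_EFinP; apply: measurable_funX.
  rewrite ge0_integral_sum //; last 2 first.
  - by move=> j; apply/measurable_EFinP; apply: measurable_funX.
  - by move=> j x _; rewrite lee_fin exprn_even_ge0.
  rewrite /M.
  have -> : ((C * (dx%:R * 64))%:E = C%:E * (dx%:R * 64)%:E)%E by rewrite EFinM.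
  rewrite lee_wpmul2l ?lee_fin //.
  apply: (le_trans (lee_sum _ (fun j _ => @gauss4 _ _ _ _ _ (Vnorm t j)))).
  by rewrite sumEFin sumr_const card_ord lee_fin mulr_natl.
pose K := M / (1 - r) ^+ 4.
have r1' : 0 < 1 - r by rewrite subr_gt0.
have Eq : forall t, (\int[P]_x (q t x ^+ 2)%:E <= K%:E)%E.
  elim => [|t IH].
    apply: le_trans (Ew 0%N) _; rewrite lee_fin /K ler_pdivlMr ?exprn_gt0 //.
    by rewrite ler_piMr // exprn_ile1 // ?subr_ge0 ?ltW // ltrBlDr ltrDl.
  apply: (le_trans (y := (\int[P]_x (r * q t x ^+ 2 + (1 - r)^-1 ^+ 3 * w t x ^+ 2)%:E)%E)).
    apply: ge0_le_integral => //.
    - by move=> x _; rewrite lee_fin sqr_ge0.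
    - apply/measurable_EFinP; apply: measurable_funD; apply: measurable_funM => //.
      + by apply/measurable_EFinP; exact: mq.
      + by apply/measurable_EFinP; exact: mw.
    - by move=> x _; rewrite lee_fin exprVn (mulrC _ (w t x ^+ 2)) qstep.
  under eq_integral do rewrite EFinD (EFinM r) (EFinM ((1 - r)^-1 ^+ 3)).
  rewrite ge0_integralD //; last 4 first.
  - by move=> x _; rewrite mule_ge0 ?lee_fin ?sqr_ge0 ?ltW.
  - by apply: emeasurable_funM => //; exact: mq.
  - by move=> x _; rewrite mule_ge0 ?lee_fin ?sqr_ge0 ?exprn_ge0 ?invr_ge0 ?ltW.
  - by apply: emeasurable_funM => //; exact: mw.
  rewrite !ge0_integralZl_EFin //; try (by move=> x _; rewrite lee_fin sqr_ge0);
    try exact: mw; try exact: mq; try (by rewrite exprn_ge0 // invr_ge0 ltW); try exact: ltW.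
  apply: le_trans (leeD (lee_wpmul2l _ IH) (lee_wpmul2l _ (Ew t))) _.
  - by rewrite lee_fin ltW.
  - by rewrite lee_fin exprn_ge0 // invr_ge0 ltW.
  rewrite -!EFinM -EFinD lee_fin le_eqVlt; apply/orP; left; apply/eqP.
  by rewrite /K; field; rewrite gt_eqF.
have KB : K <= BX ^+ 4.
  have s4 : forall a : R, 0 <= a -> Num.sqrt a ^+ 4 = a ^+ 2.
    by move=> a a0; rewrite (_ : 4%N = (2 * 2)%N) // exprM sqr_sqrtr.
  have rho1' : 0 < 1 - rho by rewrite subr_gt0.
  have ab : (1 - r)^-1 <= 2 * (1 - rho)^-1.
    have -> : (1 - r)^-1 = (1 + r) * (1 - rho)^-1.
      have h1 : 1 - r != 0 by rewrite gt_eqF.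
      have h2 : 1 - r ^+ 2 != 0 by rewrite rr gt_eqF.
      by rewrite -rr; field; rewrite ?h1 ?h2.
    rewrite ler_wpM2r ?invr_ge0 ?ltW //; lra.
  have a4 : ((1 - r) ^+ 4)^-1 <= 16 * ((1 - rho) ^+ 4)^-1.
    rewrite -!exprVn (_ : (16 : R) = 2 ^+ 4); last by ring.
    rewrite -exprMn ler_pXn2r ?nnegrE ?invr_ge0 ?(ltW r1') ?mulr_ge0 ?invr_ge0 ?(ltW rho1') //.
  rewrite /K /M /C /BX expr_div_n !exprMn !s4 // ?ler0n.
  set A := ((1 - r) ^+ 4)^-1 in a4 *.
  set B := ((1 - rho) ^+ 4)^-1 in a4 *.
  have B0 : 0 <= B by rewrite /B invr_ge0 exprn_ge0 // (ltW rho1').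
  pose Z : R := opnorm Pstar ^+ 2 * opnorm H ^+ 4 * dx%:R ^+ 2.
  have Z0 : 0 <= Z by apply: mulr_ge0; [apply: mulr_ge0|]; exact: exprn_even_ge0.
  have -> : opnorm Pstar ^+ 2 * opnorm H ^+ 4 * (2 * dx%:R) * (dx%:R * 64) * A = 128 * (Z * A).
    by rewrite /Z; ring.
  have -> : 12 ^+ 4 * 2 ^+ 2 * opnorm H ^+ 4 * opnorm Pstar ^+ 2 * dx%:R ^+ 2 * B = 12 ^+ 4 * 2 ^+ 2 * (Z * B).
    by rewrite /Z; ring.
  have h1 : Z * A <= 16 * (Z * B) by rewrite mulrCA ler_wpM2l.
  have h2 : 0 <= Z * B by rewrite mulr_ge0.
  have h3 : 2048 <= (12 : R) ^+ 4 * 2 ^+ 2 by lra.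
  nra.
apply: ge_ereal_sup => _ [t _ <-].
apply: (le_trans (y := (\int[P]_x (q t x ^+ 2)%:E)%E)); last first.
  by apply: le_trans (Eq t) _; rewrite lee_fin.
apply: ge0_le_integral => //.
- by move=> x _; rewrite lee_fin exprn_even_ge0.
- under eq_fun do rewrite (_ : 4%N = (2 * 2)%N) // exprM norm2_sq.
  apply/measurable_EFinP; apply: measurable_funX; apply: measurable_sum => i.
  by apply: measurable_funX; exact: mX.
- move=> x _; rewrite lee_fin (_ : 4%N = (2 * 2)%N) // exprM norm2_sq.
  rewrite ler_pXn2r ?nnegrE ?sum_sq_ge0 //.
  apply: ler_sum => i _; rewrite ler_peMl ?sqr_ge0 //.
Unshelve. all: by end_near.
Qed.
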